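(* Let $A$ be a Banach algebra such that $A^2=\mathrm{span}\{ab:a,b\in A\}$ is dense in $A$. Then, as vector spaces, $$\mathcal H^1(A\bowtie^{\mathrm{id}}A,(A\bowtie^{\mathrm{id}}A)^* )\cong\mathcal H^1(A,A^* )\oplus\mathcal H^1(A,A^* ).$$
   Context: $A\bowtie^{\mathrm{id}}A$ is the Banach space $\{(a,b):a,b\in A\}$ with norm $\|a\|+\|b\|$ and product $(a,b)(a',b')=(aa',\ ab'+ba'+bb')$. For a Banach algebra $C$, $C^*$ is a $C$-bimodule via $\langle c\cdot f,x\rangle=f(xc)$, $\langle f\cdot c,x\rangle=f(cx)$; $\mathcal Z^1(C,C^* )$ is the space of bounded derivations $D:C\to C^*$ ($D(xy)=x\cdot D(y)+D(x)\cdot y$), $\mathcal B^1(C,C^* )$ the inner derivations $c\mapsto c\cdot f-f\cdot c$ ($f\in C^*$), and $\mathcal H^1(C,C^* )=\mathcal Z^1(C,C^* )/\mathcal B^1(C,C^* )$. *)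

(* Defs.v *)
From Stdlib Require Import Reals.
From HB Require Import structures.
From mathcomp Require Import all_boot all_order all_algebra.
Set Implicit Arguments. Unset Strict Implicit. Unset Printing Implicit Defensive.
Import GRing.Theory.
Local Open Scope ring_scope.

Section Defs.
Variable K : fieldType.

Definition is_absval (nrm : K -> R) : Prop :=
  [/\ (forall a : K, Rle R0 (nrm a)),
      (forall a : K, nrm a = R0 <-> a = 0),
      (forall a b : K, nrm (a * b) = Rmult (nrm a) (nrm b))
    & (forall a b : K, Rle (nrm (a + b)) (Rplus (nrm a) (nrm b)))].

Variable nrm : K -> R.
Variable V : lmodType K.

Definition is_banach_algebra (mul : V -> V -> V) (nV : V -> R) : Prop :=
  (forall (a : K) (x y z : V), mul (a *: x + y) z = a *: mul x z + mul y z)/\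
      (forall (a : K) (x y z : V), mul z (a *: x + y) = a *: mul z x + mul z y)/\
      (forall x y z : V, mul x (mul y z) = mul (mul x y) z)/\
      (forall x : V, Rle R0 (nV x))/\
      (forall x : V, nV x = R0 -> x = 0)/\
      (forall x y : V, Rle (nV (x + y)) (Rplus (nV x) (nV y)))/\
      (forall (a : K) (x : V), nV (a *: x) = Rmult (nrm a) (nV x))/\
      (forall x y : V, Rle (nV (mul x y)) (Rmult (nV x) (nV y)))/\
      (forall u : nat -> V,
         (forall eps, Rlt R0 eps -> exists N : nat, forall m n : nat,
              (N <= m)%N -> (N <= n)%N -> Rlt (nV (u m - u n)) eps) ->
         exists l : V, forall eps, Rlt R0 eps -> exists N : nat, forall n : nat,
              (N <= n)%N -> Rlt (nV (u n - l)) eps).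

Definition square_dense (mul : V -> V -> V) (nV : V -> R) : Prop :=
  forall (x : V) (eps : R), Rlt R0 eps ->
    exists s : seq (K * (V * V)),
      Rlt (nV (x - \sum_(p <- s) p.1 *: mul p.2.1 p.2.2)) eps.

Definition is_bdd_functional (nV : V -> R) (f : V -> K) : Prop :=
  (forall (a : K) (x y : V), f (a *: x + y) = a * f x + f y) /\
  (exists M : R, forall x : V, Rle (nrm (f x)) (Rmult M (nV x))).

(* Z^1(V, V^* ) : bounded derivations D : V -> V^*, where D c is the functional
   z |-> D c z, and the bimodule actions are <c.f, z> = f(zc), <f.c, z> = f(cz). *)
Definition is_bdd_derivation (mul : V -> V -> V) (nV : V -> R)
    (D : V -> V -> K) : Prop :=
  [/\ (forall (a : K) (x y z : V), D (a *: x + y) z = a * D x z + D y z),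
      (forall c : V, is_bdd_functional nV (D c)),
      (exists M : R, forall c z : V,
          Rle (nrm (D c z)) (Rmult M (Rmult (nV c) (nV z))))
    &
      (forall x y z : V, D (mul x y) z = D y (mul z x) + D x (mul y z))].

Definition is_inner_derivation (mul : V -> V -> V) (nV : V -> R)
    (D : V -> V -> K) : Prop :=
  exists f : V -> K, is_bdd_functional nV f /\
    forall c z : V, D c z = f (mul z c) - f (mul c z).

End Defs.

Definition bowtie_mul (K : fieldType) (V : lmodType K) (mul : V -> V -> V)
  (p q : V * V) : V * V :=
  (mul p.1 q.1, mul p.1 q.2 + mul p.2 q.1 + mul p.2 q.2).

Definition bowtie_norm (K : fieldType) (V : lmodType K) (nV : V -> R)
  (p : V * V) : R := Rplus (nV p.1) (nV p.2).

(* Vector-space isomorphism  Z1/B1 ≅ (Z2/B2) ⊕ (Z2/B2), expressed through a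
   linear map Phi : Z1 -> Z2 x Z2 on representatives which induces a linear
   bijection of the quotient spaces:
   - Phi is linear on Z1 and maps Z1 into Z2 x Z2,
   - the induced map is surjective (every pair of classes is hit),
   - the induced map is well defined and injective: Phi D in B2 x B2 iff D in B1. *)
Definition H1_iso_direct_sum (K : fieldType) (X Y : Type)
    (Z1 B1 : (X -> X -> K) -> Prop) (Z2 B2 : (Y -> Y -> K) -> Prop) : Prop :=
  exists Phi : (X -> X -> K) -> (Y -> Y -> K) * (Y -> Y -> K),
  [/\ (forall (a : K) (D D' : X -> X -> K), Z1 D -> Z1 D' ->
         Phi (fun c z => a * D c z + D' c z) =
         ((fun x y => a * (Phi D).1 x y + (Phi D').1 x y),
          (fun x y => a * (Phi D).2 x y + (Phi D').2 x y))),
      (forall D, Z1 D -> Z2 (Phi D).1 /\ Z2 (Phi D).2),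
      (forall D1 D2, Z2 D1 -> Z2 D2 -> exists D, Z1 D /\
          B2 (fun x y => (Phi D).1 x y - D1 x y) /\
          B2 (fun x y => (Phi D).2 x y - D2 x y))
    & (forall D, Z1 D -> (B2 (Phi D).1 /\ B2 (Phi D).2 <-> B1 D))].

(* Main.v *)
Require Import Defs.
From Stdlib Require Import Reals Lra.
From HB Require Import structures.
From mathcomp Require Import all_boot all_order all_algebra.

Section RealFacts.
Local Open Scope R_scope.

Lemma R_small (C r : R) : 0 <= C -> 0 <= r ->
  (forall eps, 0 < eps -> r <= C * eps) -> r = 0.
Proof.
intros HC Hr H. destruct (Rle_lt_or_eq_dec 0 r Hr) as [Hp|]; [|lra].
set (eps := r / (2 * (C + 1))).
assert (He : eps * (2 * (C+1)) = r) by (unfold eps; field; lra).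
assert (Hep : 0 < eps) by (unfold eps; apply Rdiv_lt_0_compat; lra).
specialize (H eps Hep). nra.
Qed.

Lemma R_chain1 (a M X C Y : R) : a <= M * X -> 0 <= X -> X <= C * Y ->
  a <= (Rmax M 0 * C) * Y.
Proof.
intros H1 H2 H3. pose proof (Rmax_l M 0). pose proof (Rmax_r M 0).
assert (M * X <= Rmax M 0 * X) by nra.
assert (Rmax M 0 * X <= Rmax M 0 * (C * Y)) by nra. nra.
Qed.

Lemma R_chain2 (a M X Y C P Q : R) : a <= M * (X * Y) -> 0 <= X -> 0 <= Y ->
  X <= C * P -> Y <= C * Q -> a <= (Rmax M 0 * C * C) * (P * Q).
Proof.
intros H1 H2 H3 H4 H5. pose proof (Rmax_l M 0). pose proof (Rmax_r M 0).
assert (X * Y <= (C * P) * (C * Q)) by nra.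
assert (0 <= X * Y) by nra.
assert (M * (X * Y) <= Rmax M 0 * (X * Y)) by nra.
assert (Rmax M 0 * (X * Y) <= Rmax M 0 * ((C * P) * (C * Q))) by nra.
nra.
Qed.

Lemma R_add (a b c M N X : R) : a <= b + c -> b <= M * X -> c <= N * X -> 0 <= X ->
  a <= (Rmax M 0 + Rmax N 0) * X.
Proof.
intros. pose proof (Rmax_l M 0). pose proof (Rmax_l N 0). nra.
Qed.

Lemma R_eps (a M X C Y eps : R) : a <= M * X -> 0 <= X -> X <= C * Y -> Y < eps ->
  0 <= C -> a <= (Rmax M 0 * C) * eps.
Proof.
intros H1 H2 H3 H4 H5. pose proof (Rmax_l M 0). pose proof (Rmax_r M 0).
assert (a <= (Rmax M 0 * C) * Y) by (eapply R_chain1; eauto).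
assert (0 <= Rmax M 0 * C) by nra. nra.
Qed.

Lemma R_zero_bound (M x : R) : 0 <= x -> 0 <= 0 * x.
Proof. intros; lra. Qed.

Lemma R_e1 (x k : R) : x + k * x <= (1 + k) * x.
Proof. right; ring. Qed.

Lemma R_e2 (x : R) : 0 + x <= 1 * x.
Proof. right; ring. Qed.

Lemma R_p1 (x y : R) : 0 <= y -> x <= 1 * (x + y).
Proof. intros; lra. Qed.

Lemma R_p2 (z x y : R) : z <= x + y -> z <= 1 * (x + y).
Proof. intros; lra. Qed.

Lemma R_pos1 (k : R) : 0 <= k -> 0 <= 1 + k.
Proof. intros; lra. Qed.

Lemma R_mul0 (x : R) : 0 * x = 0.
Proof. ring. Qed.

Lemma R_add0 (x y: R) : 0 <= x -> 0 <= y -> 0 <= x + y.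
Proof. intros; lra. Qed.

Lemma R_mulC0 (C x : R) : 0 <= C -> 0 <= x -> 0 <= C * x.
Proof. intros; nra. Qed.

End RealFacts.

From mathcomp Require Import ring.
Set Implicit Arguments. Unset Strict Implicit. Unset Printing Implicit Defensive.
Import GRing.Theory.
Local Open Scope ring_scope.

Section Lin.
Variable K : fieldType.

Lemma linf0 (V : lmodType K) (f : V -> K) :
  (forall a x y, f (a *: x + y) = a * f x + f y) -> f 0 = 0.
Proof.
move=> H; have := H 1 0 0; rewrite scale1r addr0 mul1r.
by move/(congr1 (fun t => t - f 0)); rewrite subrr addrK.
Qed.

Lemma linfD (V : lmodType K) (f : V -> K) :
  (forall a x y, f (a *: x + y) = a * f x + f y) -> forall x y, f (x + y) = f x + f y.
Proof. by move=> H x y; have := H 1 x y; rewrite scale1r mul1r. Qed.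

Lemma linfZ (V : lmodType K) (f : V -> K) :
  (forall a x y, f (a *: x + y) = a * f x + f y) -> forall a x, f (a *: x) = a * f x.
Proof. by move=> H a x; have := H a x 0; rewrite !addr0 (linf0 H) addr0. Qed.

Lemma linfN (V : lmodType K) (f : V -> K) :
  (forall a x y, f (a *: x + y) = a * f x + f y) -> forall x, f (- x) = - f x.
Proof. by move=> H x; rewrite -scaleN1r (linfZ H) mulN1r. Qed.

Lemma linv0 (V W : lmodType K) (f : V -> W) :
  (forall a x y, f (a *: x + y) = a *: f x + f y) -> f 0 = 0.
Proof.
move=> H; have := H 1 0 0; rewrite !scale1r addr0.
by move/(congr1 (fun t => t - f 0)); rewrite subrr addrK.
Qed.

Lemma linvD (V W : lmodType K) (f : V -> W) :
  (forall a x y, f (a *: x + y) = a *: f x + f y) -> forall x y, f (x + y) = f x + f y.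
Proof. by move=> H x y; have := H 1 x y; rewrite !scale1r. Qed.

End Lin.
Section Ban.
Variables (K : fieldType) (nrm : K -> R) (A : lmodType K) (mul : A -> A -> A) (nA : A -> R).

Lemma ba_mulDl : is_banach_algebra nrm mul nA -> forall x y z, mul (x + y) z = mul x z + mul y z.
Proof. by case=> H1 _ x y z; have := H1 1 x y z; rewrite !scale1r. Qed.
Lemma ba_mulDr : is_banach_algebra nrm mul nA -> forall x y z, mul z (x + y) = mul z x + mul z y.
Proof. by case=> _ [H1 _] x y z; have := H1 1 x y z; rewrite !scale1r. Qed.
Lemma ba_mul0l : is_banach_algebra nrm mul nA -> forall z, mul 0 z = 0.
Proof.
move=> H z; have := ba_mulDl H 0 0 z; rewrite addr0.
by move/(congr1 (fun t => t - mul 0 z)); rewrite subrr addrK.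
Qed.
Lemma ba_mul0r : is_banach_algebra nrm mul nA -> forall z, mul z 0 = 0.
Proof.
move=> H z; have := ba_mulDr H 0 0 z; rewrite addr0.
by move/(congr1 (fun t => t - mul z 0)); rewrite subrr addrK.
Qed.
Lemma ba_mulNl : is_banach_algebra nrm mul nA -> forall x z, mul (- x) z = - mul x z.
Proof.
move=> H x z; have [H1 _] := H; have := H1 (-1) x 0 z.
by rewrite addr0 ba_mul0l // addr0 !scaleN1r.
Qed.
Lemma ba_mulNr : is_banach_algebra nrm mul nA -> forall x z, mul z (- x) = - mul z x.
Proof.
move=> H x z; have [_ [H1 _]] := H; have := H1 (-1) x 0 z.
by rewrite addr0 ba_mul0r // addr0 !scaleN1r.
Qed.
Lemma ba_n0 : is_absval nrm -> is_banach_algebra nrm mul nA -> nA 0 = R0.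
Proof.
case=> _ Hn _ _ [_ [_ [_ [_ [_ [_ [H _]]]]]]].
have := H 0 0; rewrite scale0r => ->; rewrite (proj2 (Hn 0) erefl); exact: R_mul0.
Qed.
Lemma ba_nN : is_banach_algebra nrm mul nA -> forall x, nA (- x) = Rmult (nrm (-1)) (nA x).
Proof. case=> _ [_ [_ [_ [_ [_ [H _]]]]]] x; by rewrite -H scaleN1r. Qed.
Lemma ba_pos : is_banach_algebra nrm mul nA -> forall x, Rle R0 (nA x).
Proof. by case=> _ [_ [_ [H _]]]. Qed.
Lemma ba_tri : is_banach_algebra nrm mul nA -> forall x y, Rle (nA (x + y)) (Rplus (nA x) (nA y)).
Proof. by case=> _ [_ [_ [_ [_ [H _]]]]]. Qed.
End Ban.

Section Der.
Variables (K : fieldType) (nrm : K -> R).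

Lemma der_fun (V : lmodType K) mulV nV (D : V -> V -> K) :
  is_bdd_derivation nrm mulV nV D -> forall c a x y, D c (a *: x + y) = a * D c x + D c y.
Proof. by case=> _ Hf _ _ c; case: (Hf c). Qed.

Lemma der_lin (V : lmodType K) mulV nV (D : V -> V -> K) :
  is_bdd_derivation nrm mulV nV D -> forall z a x y, D (a *: x + y) z = a * D x z + D y z.
Proof. by case=> Hl _ _ _ z a x y; exact: Hl. Qed.

Lemma der0l (V : lmodType K) mulV nV (D : V -> V -> K) :
  is_bdd_derivation nrm mulV nV D -> forall z, D 0 z = 0.
Proof. by move=> H z; apply: (linf0 (f := fun c => D c z)) => a x y; exact: der_lin H _ _ _ _. Qed.

Lemma der0r (V : lmodType K) mulV nV (D : V -> V -> K) :
  is_bdd_derivation nrm mulV nV D -> forall c, D c 0 = 0.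
Proof. by move=> H c; apply: linf0; exact: der_fun H c. Qed.

Lemma pull_der (V W : lmodType K) (mulV : V -> V -> V) (nV : V -> R)
  (mulW : W -> W -> W) (nW : W -> R) (e : V -> W) (C : R) (D : W -> W -> K) :
  (forall w, Rle R0 (nW w)) ->
  (forall a x y, e (a *: x + y) = a *: e x + e y) ->
  (forall x y, mulW (e x) (e y) = e (mulV x y)) ->
  (forall x, Rle (nW (e x)) (Rmult C (nV x))) ->
  is_bdd_derivation nrm mulW nW D ->
  is_bdd_derivation nrm mulV nV (fun x y => D (e x) (e y)).
Proof.
move=> HnW He Hm Hb [Hl Hf [M HM] HL]; split.
- by move=> a x y z /=; rewrite He Hl.
- move=> c; have [Hfl [Mc HMc]] := Hf (e c); split.
    by move=> a x y; rewrite He Hfl.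
  exists (Rmult (Rmax Mc R0) C) => x; apply: R_chain1 (HMc _) (HnW _) (Hb _).
- exists (Rmult (Rmult (Rmax M R0) C) C) => c z.
  exact: R_chain2 (HM _ _) (HnW _) (HnW _) (Hb _) (Hb _).
- by move=> x y z /=; rewrite -!Hm HL.
Qed.

Lemma pull_inner (V W : lmodType K) (mulV : V -> V -> V) (nV : V -> R)
  (mulW : W -> W -> W) (nW : W -> R) (e : V -> W) (C : R) (D : W -> W -> K) :
  (forall w, Rle R0 (nW w)) ->
  (forall a x y, e (a *: x + y) = a *: e x + e y) ->
  (forall x y, mulW (e x) (e y) = e (mulV x y)) ->
  (forall x, Rle (nW (e x)) (Rmult C (nV x))) ->
  is_inner_derivation nrm mulW nW D ->
  is_inner_derivation nrm mulV nV (fun x y => D (e x) (e y)).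
Proof.
move=> HnW He Hm Hb [f [[Hfl [M HM]] HD]].
exists (fun x => f (e x)); split; first split.
- by move=> a x y; rewrite He Hfl.
- exists (Rmult (Rmax M R0) C) => x; apply: R_chain1 (HM _) (HnW _) (Hb _).
- by move=> c z; rewrite HD !Hm.
Qed.

Lemma add_der (V : lmodType K) (mulV : V -> V -> V) (nV : V -> R) (D D' : V -> V -> K) :
  (forall a b, Rle (nrm (a + b)) (Rplus (nrm a) (nrm b))) ->
  (forall v, Rle R0 (nV v)) ->
  is_bdd_derivation nrm mulV nV D -> is_bdd_derivation nrm mulV nV D' ->
  is_bdd_derivation nrm mulV nV (fun c z => D c z + D' c z).
Proof.
move=> Htri Hpos [Hl Hf [M HM] HL] [Hl' Hf' [M' HM'] HL']; split.
- by move=> a x y z; rewrite Hl Hl'; ring.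
- move=> c; have [Hfl [Mc HMc]] := Hf c; have [Hfl' [Mc' HMc']] := Hf' c; split.
    by move=> a x y; rewrite Hfl Hfl'; ring.
  exists (Rplus (Rmax Mc R0) (Rmax Mc' R0)) => x /=.
  exact: R_add (Htri _ _) (HMc _) (HMc' _) (Hpos _).
- exists (Rplus (Rmax M R0) (Rmax M' R0)) => c z /=.
  eapply R_add; [apply: Htri| apply: HM | apply: HM' | apply: R_mulC0; exact: Hpos].
- by move=> x y z; rewrite HL HL'; ring.
Qed.

Lemma add_inner (V : lmodType K) (mulV : V -> V -> V) (nV : V -> R) (D D' : V -> V -> K) :
  (forall a b, Rle (nrm (a + b)) (Rplus (nrm a) (nrm b))) ->
  (forall v, Rle R0 (nV v)) ->
  is_inner_derivation nrm mulV nV D -> is_inner_derivation nrm mulV nV D' ->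
  is_inner_derivation nrm mulV nV (fun c z => D c z + D' c z).
Proof.
move=> Htri Hpos [f [[Hfl [M HM]] HD]] [f' [[Hfl' [M' HM']] HD']].
exists (fun x => f x + f' x); split; first split.
- by move=> a x y; rewrite Hfl Hfl'; ring.
- exists (Rplus (Rmax M R0) (Rmax M' R0)) => x /=.
  exact: R_add (Htri _ _) (HM _) (HM' _) (Hpos _).
- by move=> c z; rewrite HD HD'; ring.
Qed.

Lemma inner_ext (V : lmodType K) (mulV : V -> V -> V) (nV : V -> R) (D D' : V -> V -> K) :
  (forall c z, D c z = D' c z) ->
  is_inner_derivation nrm mulV nV D' -> is_inner_derivation nrm mulV nV D.
Proof. by move=> H [f [Hf HD]]; exists f; split=> // c z; rewrite H HD. Qed.

Lemma zero_inner (V : lmodType K) (mulV : V -> V -> V) (nV : V -> R) (D : V -> V -> K) :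
  (forall v, Rle R0 (nV v)) -> nrm 0 = R0 ->
  (forall c z, D c z = 0) -> is_inner_derivation nrm mulV nV D.
Proof.
move=> Hpos Hn0 H; exists (fun _ => 0); split; first split.
- by move=> a x y; rewrite mulr0 addr0.
- exists R0 => x; rewrite Hn0 R_mul0; exact: Rle_refl.
- by move=> c z; rewrite H subrr.
Qed.

End Der.

Lemma cross (K : fieldType) (nrm : K -> R) (A W : lmodType K) (mul : A -> A -> A) (nA : A -> R)
  (mulW : W -> W -> W) (nW : W -> R) (D : W -> W -> K) (u : W) (e : A -> W) (C : R) :
  is_absval nrm -> square_dense mul nA -> (forall w, Rle R0 (nW w)) -> Rle R0 C ->
  (forall a x y, e (a *: x + y) = a *: e x + e y) ->
  (forall x y, mulW (e x) (e y) = e (mul x y)) ->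
  (forall x, Rle (nW (e x)) (Rmult C (nA x))) ->
  (forall b, mulW (e b) u = 0) -> (forall a, mulW u (e a) = 0) ->
  is_bdd_derivation nrm mulW nW D -> forall y, D u (e y) = 0.
Proof.
move=> [Hn0 Hn _ _] Hdense HnW HC He Hm Hb Hu1 Hu2 HD.
have Hfl := der_fun HD u.
have Hprod : forall p q, D u (e (mul p q)) = 0.
  move=> p q; rewrite -Hm.
  have := (let: And4 _ _ _ HL := HD in HL) (e q) u (e p).
  by rewrite Hu1 Hu2 (der0l HD) (der0r HD) addr0 => <-.
have Hsum : forall s : seq (K * (A * A)),
    D u (e (\sum_(p <- s) p.1 *: mul p.2.1 p.2.2)) = 0.
  elim=> [|p s IH]; first by rewrite big_nil (linv0 He) (der0r HD).
  by rewrite big_cons He Hfl Hprod IH mulr0 addr0.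
move=> y.
have [_ [Mu HMu]] := (let: And4 _ Hf _ _ := HD in Hf) u.
apply/Hn; apply: (@R_small (Rmult (Rmax Mu R0) C)).
- apply: R_mulC0 => //; exact: Rmax_r.
- exact: Hn0.
move=> eps Heps; have [s Hs] := Hdense y eps Heps.
set S := \sum_(p <- s) _ in Hs.
have -> : e y = e (y - S) + e S by rewrite -(linvD He) subrK.
rewrite (linfD Hfl) Hsum addr0.
exact: R_eps (HMu _) (HnW _) (Hb _) Hs HC.
Qed.

Theorem theorem6p11 (K : fieldType) (nrm : K -> R) (A : lmodType K)
    (mul : A -> A -> A) (nA : A -> R) :
  is_absval nrm ->
  is_banach_algebra nrm mul nA ->
  square_dense mul nA ->
  H1_iso_direct_sum
    (is_bdd_derivation nrm (bowtie_mul mul) (bowtie_norm nA))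
    (is_inner_derivation nrm (bowtie_mul mul) (bowtie_norm nA))
    (is_bdd_derivation nrm mul nA)
    (is_inner_derivation nrm mul nA).
Proof.
move=> Habs Hba Hdense.
have [Hnpos Hn _ Htri] := Habs.
have nrm0 : nrm 0 = R0 by apply/(Hn 0).
have nApos := ba_pos Hba.
have nBpos : forall w : A * A, Rle R0 (bowtie_norm nA w).
  by move=> w; apply: R_add0; apply: nApos.
have P00 : (0 : A * A) = (0, 0) by [].
pose e1 := fun x : A => (x, - x) : A * A.
pose e2 := fun x : A => (0, x) : A * A.
pose p1 := fun c : A * A => c.1.
pose p2 := fun c : A * A => c.1 + c.2.
have He1 : forall a x y, e1 (a *: x + y) = a *: e1 x + e1 y.
  move=> a x y; rewrite /e1; change ((a *: x + y, - (a *: x + y)) = (a *: x + y, a *: (- x) + - y) :> A * A).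
  by rewrite scalerN opprD.
have Hm1 : forall x y, bowtie_mul mul (e1 x) (e1 y) = e1 (mul x y).
  move=> x y; rewrite /bowtie_mul /e1 /= !(ba_mulNl Hba) !(ba_mulNr Hba) !opprK.
  by rewrite -addrA addNr addr0.
have Hb1 : forall x, Rle (bowtie_norm nA (e1 x)) (Rmult (Rplus R1 (nrm (-1))) (nA x)).
  by move=> x; rewrite /bowtie_norm /= (ba_nN Hba); apply: R_e1.
have He2 : forall a x y, e2 (a *: x + y) = a *: e2 x + e2 y.
  move=> a x y; rewrite /e2; change (((0:A), a *: x + y) = (a *: 0 + 0, a *: x + y) :> A * A).
  by rewrite scaler0 addr0.
have Hm2 : forall x y, bowtie_mul mul (e2 x) (e2 y) = e2 (mul x y).
  move=> x y; rewrite /bowtie_mul /e2 /= !(ba_mul0l Hba) !(ba_mul0r Hba).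
  by rewrite !add0r.
have Hb2 : forall x, Rle (bowtie_norm nA (e2 x)) (Rmult R1 (nA x)).
  by move=> x; rewrite /bowtie_norm /= (ba_n0 Habs Hba); apply: R_e2.
have Hp1l : forall a x y, p1 (a *: x + y) = a *: p1 x + p1 y by [].
have Hp1m : forall x y, mul (p1 x) (p1 y) = p1 (bowtie_mul mul x y) by [].
have Hp1b : forall x, Rle (nA (p1 x)) (Rmult R1 (bowtie_norm nA x)).
  by move=> x; apply: R_p1; apply: nApos.
have Hp2l : forall a x y, p2 (a *: x + y) = a *: p2 x + p2 y.
  by move=> a x y; rewrite /p2 /= scalerDr addrACA.
have Hp2m : forall x y, mul (p2 x) (p2 y) = p2 (bowtie_mul mul x y).
  move=> x y; rewrite /p2 /bowtie_mul /= (ba_mulDl Hba) !(ba_mulDr Hba).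
  by rewrite !addrA.
have Hp2b : forall x, Rle (nA (p2 x)) (Rmult R1 (bowtie_norm nA x)).
  by move=> x; apply: R_p2; apply: (ba_tri Hba).
have O1 : forall b x, bowtie_mul mul (e2 b) (e1 x) = 0.
  move=> b x; rewrite P00 /bowtie_mul /e1 /e2 /= !(ba_mul0l Hba) (ba_mulNr Hba).
  by rewrite add0r addrN.
have O2 : forall x b, bowtie_mul mul (e1 x) (e2 b) = 0.
  move=> x b; rewrite P00 /bowtie_mul /e1 /e2 /= !(ba_mul0r Hba) (ba_mulNl Hba).
  by rewrite addr0 addrN.
have Hk : Rle R0 (Rplus R1 (nrm (-1))).
  by apply: R_pos1; apply: Hnpos.
have Decomp : forall D, is_bdd_derivation nrm (bowtie_mul mul) (bowtie_norm nA) D ->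
    forall c z, D c z = D (e1 c.1) (e1 z.1) + D (e2 (c.1 + c.2)) (e2 (z.1 + z.2)).
  move=> D HD c z.
  have Hdec : forall c : A * A, c = e1 c.1 + e2 (c.1 + c.2).
    case=> c1 c2; rewrite /e1 /e2; change ((c1, c2) = (c1 + 0, - c1 + (c1 + c2)) :> A * A).
    by rewrite addr0 addKr.
  have DDl : forall x y w, D (x + y) w = D x w + D y w.
    by move=> x y w; have := der_lin HD w 1 x y; rewrite scale1r mul1r.
  have DDr : forall x y w, D w (x + y) = D w x + D w y.
    by move=> x y w; have := der_fun HD w 1 x y; rewrite scale1r mul1r.
  have C12 : forall x y, D (e1 x) (e2 y) = 0.
    move=> x; apply: (cross Habs Hdense nBpos _ He2 Hm2 Hb2 _ _ HD).
    - exact: Rle_0_1.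
    - by move=> b; apply: O1.
    - by move=> a; apply: O2.
  have C21 : forall y x, D (e2 y) (e1 x) = 0.
    move=> y; apply: (cross Habs Hdense nBpos Hk He1 Hm1 Hb1 _ _ HD).
    - by move=> b; apply: O2.
    - by move=> a; apply: O1.
  rewrite {1}[c]Hdec {1}[z]Hdec DDl !DDr C12 C21 addr0 add0r.
  by [].
pose Phi := fun D : A * A -> A * A -> K =>
  ((fun x y => D (e1 x) (e1 y)), (fun x y => D (e2 x) (e2 y))).
exists Phi; split.
- by move=> a D D' _ _.
- move=> D HD; split.
  + exact: pull_der nBpos He1 Hm1 Hb1 HD.
  + exact: pull_der nBpos He2 Hm2 Hb2 HD.
- move=> D1 D2 HD1 HD2.
  exists (fun c z => D1 (p1 c) (p1 z) + D2 (p2 c) (p2 z)); split.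
    apply: add_der Htri nBpos _ _.
    + exact: pull_der nApos Hp1l Hp1m Hp1b HD1.
    + exact: pull_der nApos Hp2l Hp2m Hp2b HD2.
  split; apply: zero_inner nApos nrm0 _ => x y; rewrite /Phi /p1 /p2 /e1 /e2 /=.
  + by rewrite !subrr (der0l HD2) addr0 subrr.
  + by rewrite !add0r (der0l HD1) add0r subrr.
- move=> D HD; split.
  + case=> H1 H2.
    apply: inner_ext (add_inner Htri nBpos (pull_inner nApos Hp1l Hp1m Hp1b H1)
                        (pull_inner nApos Hp2l Hp2m Hp2b H2)).
    move=> c z; exact: Decomp.
  + move=> HB; split.
    * exact: pull_inner nBpos He1 Hm1 Hb1 HB.
    * exact: pull_inner nBpos He2 Hm2 Hb2 HB.
Qed.
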